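(* Let $p$ be an odd prime and $q\in\mathbb C_p$ with $|1-q|_p<p^{-1/(p-1)}$. For $h\in\mathbb Z$, $n\in\mathbb Z_+$ and $r\in\mathbb N$, $$\int_{\mathbb Z_p}E_{n,q}^{(h,-r)}(x)\,d\mu_{-1}(x)=\frac{1}{2^r}\sum_{m=0}^r\frac{1}{[m]_q!}\sum_{k=0}^mq^{(h-r)m}S_1(m-1,k;q)(-1)^k[r]_q^{m-k}E_{n,q}(m)$$ $$=\frac{1}{2^r}\sum_{m=0}^r\frac{1}{[m]_q!}\sum_{k=0}^mq^{(h-r)m}S_1(m-1,k;q)(-1)^k[r]_q^{m-k}\cdot\frac{1}{(1-q)^n}\sum_{j=0}^n\sum_{l=0}^j\binom nj\binom jl(-1)^{j+l}(1-q)^lq^{mj}E_{l,q}.$$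
   Context: For $x\in\mathbb Z_p$, $[x]_q=\frac{1-q^x}{1-q}$; $[m]_q!=[m]_q\cdots[1]_q$, $[0]_q!=1$. The fermionic $p$-adic integral is $\int_{\mathbb Z_p}f(x)\,d\mu_{-1}(x)=\lim_{N\to\infty}\sum_{x=0}^{p^N-1}f(x)(-1)^x$. $E_{n,q}=\int_{\mathbb Z_p}[y]_q^n\,d\mu_{-1}(y)$ and $E_{n,q}(x)=\int_{\mathbb Z_p}[x+y]_q^n\,d\mu_{-1}(y)$ are the $q$-Euler numbers and polynomials. The extended higher-order Nörlund type $q$-Euler polynomials are $E_{n,q}^{(h,-r)}(x)=\frac{1}{(1-q)^n}\sum_{l=0}^n\binom nl(-1)^l\frac{q^{lx}}{\int_{\mathbb Z_p}\cdots\int_{\mathbb Z_p}q^{l(x_1+\cdots+x_r)}q^{\sum_{j=1}^r(h-j)x_j}\,d\mu_{-1}(x_1)\cdots d\mu_{-1}(x_r)}$. The $q$-Stirling numbers of the first kind are defined by $\prod_{k=1}^N(1+[k]_qz)=\sum_{k\ge0}S_1(N,k;q)z^k$ for $N\ge-1$ (empty product $=1$; $S_1(N,k;q)=0$ for $k>N$; $S_1(-1,0;q)=1$). *)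

(* Defs.v *)
From mathcomp Require Import all_boot all_order all_algebra.
From mathcomp Require Import boolp reals exp.
Set Implicit Arguments. Unset Strict Implicit. Unset Printing Implicit Defensive.
Import Order.TTheory GRing.Theory Num.Theory.
Local Open Scope ring_scope.

Section PadicDefs.
Variables (R : realType) (K : fieldType).

Record padic_abs (p : nat) (v : K -> R) : Prop := PadicAbs {
  pabs_eq0 : forall x, v x = 0 <-> x = 0;
  pabs_ge0 : forall x, 0 <= v x;
  pabs_mul : forall x y, v (x * y) = v x * v y;
  pabs_ultra : forall x y, v (x + y) <= Num.max (v x) (v y);
  pabs_p : v p%:R = (p%:R)^-1 }.

Definition pcvg (v : K -> R) (u : nat -> K) (l : K) : Prop :=
  forall eps : R, 0 < eps -> exists N : nat, forall m, (N <= m)%N -> v (u m - l) < eps.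

Definition pcauchy (v : K -> R) (u : nat -> K) : Prop :=
  forall eps : R, 0 < eps -> exists N : nat,
    forall m k, (N <= m)%N -> (N <= k)%N -> v (u m - u k) < eps.

Definition pcomplete (v : K -> R) : Prop :=
  forall u, pcauchy v u -> exists l, pcvg v u l.

(* the limit (chosen classically when it exists; 0 otherwise) *)
Definition plim (v : K -> R) (u : nat -> K) : K :=
  match pselect (exists l, pcvg v u l) with
  | left e => proj1_sig (cid e)
  | right _ => 0
  end.

(* Fermionic p-adic integral:  lim_N sum_{x=0}^{p^N-1} f(x) (-1)^x.
   Only the values of f on the naturals enter the definition, so the
   integrand is given as a function nat -> K. *)
Definition fermionic (v : K -> R) (p : nat) (f : nat -> K) : K :=
  plim v (fun N => \sum_(x < p ^ N) f x * (-1) ^+ x).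

(* r-fold iterated fermionic integral of F(x_1,...,x_r), F given on lists
   [:: x_1; ...; x_r]. *)
Fixpoint fermionic_multi (v : K -> R) (p : nat) (r : nat)
    (F : seq nat -> K) : K :=
  match r with
  | 0 => F [::]
  | r'.+1 => fermionic v p (fun x => fermionic_multi v p r' (fun xs => F (x :: xs)))
  end.

Definition qnum (q : K) (x : nat) : K := (1 - q ^+ x) / (1 - q).
Definition qfact (q : K) (m : nat) : K := \prod_(1 <= k < m.+1) qnum q k.

Definition qEuler (v : K -> R) (p : nat) (q : K) (n : nat) : K :=
  fermionic v p (fun y => qnum q y ^+ n).
Definition qEulerPoly (v : K -> R) (p : nat) (q : K) (n : nat) (x : nat) : K :=
  fermionic v p (fun y => qnum q (x + y) ^+ n).

Definition norlund_qEuler (v : K -> R) (p : nat) (q : K) (h : int) (r n : nat)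
    (x : nat) : K :=
  ((1 - q) ^+ n)^-1 *
  \sum_(l < n.+1) ('C(n, l))%:R * (-1) ^+ l * q ^+ (l * x) /
     fermionic_multi v p r (fun xs =>
        q ^+ (l * sumn xs) *
        \prod_(j < r) q ^ ((h - (j.+1)%:Z) * (nth 0%N xs j)%:Z)).

(* q-Stirling numbers of the first kind S_1(N,k;q), N >= -1:
   prod_{k=1}^N (1 + [k]_q z) = sum_k S_1(N,k;q) z^k  (empty product for N = -1). *)
Definition qStirling1 (q : K) (N : int) (k : nat) : K :=
  match N with
  | Posz N' => (\prod_(1 <= i < N'.+1) (1 + qnum q i *: 'X))`_k
  | Negz _ => (k == 0%N)%:R
  end.

End PadicDefs.

(* Main.v *)
Require Import Defs.
From mathcomp Require Import all_boot all_order all_algebra.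
From mathcomp Require Import boolp reals exp.
From mathcomp Require Import ring lra zify.
Import Order.TTheory GRing.Theory Num.Theory.
Local Open Scope ring_scope.
Set Implicit Arguments. Unset Strict Implicit. Unset Printing Implicit Defensive.

Section Basic.
Variables (R : realType) (K : fieldType) (v : K -> R) (p : nat).
Hypothesis Hv : padic_abs p v.
Hypothesis pp : prime p.

Lemma vge0 x : 0 <= v x. Proof. exact: pabs_ge0 Hv x. Qed.
Lemma vM x y : v (x * y) = v x * v y. Proof. exact: (pabs_mul Hv x y). Qed.
Lemma vD x y : v (x + y) <= Num.max (v x) (v y). Proof. exact: (pabs_ultra Hv x y). Qed.
Lemma v0 : v 0 = 0.
Proof. have [_ h] := pabs_eq0 Hv 0; by apply/eqP; rewrite (h erefl). Qed.
Lemma veq0 x : (v x == 0) = (x == 0).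
Proof. have [h1 h2] := pabs_eq0 Hv x; apply/eqP/eqP => [/h1|->] //; exact: v0. Qed.
Lemma v1 : v 1 = 1.
Proof.
have h : v 1 = v 1 * v 1 by rewrite -vM mulr1.
have n0 : v 1 != 0 by rewrite veq0 oner_eq0.
by apply: (mulfI n0); rewrite mulr1 -h.
Qed.
Lemma vN1 : v (-1) = 1.
Proof.
have h : v (-1) * v (-1) = 1 by rewrite -vM mulrNN mulr1 v1.
have g := vge0 (-1).
have : (v (-1) - 1) * (v (-1) + 1) = 0 by rewrite -subr_sqr expr2 h expr1n subrr.
move/eqP; rewrite mulf_eq0 => /orP[/eqP|/eqP]; lra.
Qed.
Lemma vN x : v (- x) = v x.
Proof. by rewrite -mulN1r vM vN1 mul1r. Qed.
Lemma vB x y : v (x - y) = v (y - x).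
Proof. by rewrite -vN opprB. Qed.
Lemma vDle x y B : v x <= B -> v y <= B -> v (x + y) <= B.
Proof. move=> h1 h2; apply: le_trans (vD x y) _; rewrite ge_max h1 h2 //. Qed.
Lemma vDlt x y B : v x < B -> v y < B -> v (x + y) < B.
Proof. move=> h1 h2; apply: le_lt_trans (vD x y) _; rewrite gt_max h1 h2 //. Qed.
Lemma vDstrict a b : v b < v a -> v (a + b) = v a.
Proof.
move=> h; apply/eqP; rewrite eq_le; apply/andP; split.
  by apply: vDle => //; exact: ltW.
have e : a = (a + b) + (- b) by rewrite addrK.
have := vD (a + b) (- b); rewrite -e vN.
case: (leP (v (a + b)) (v b)) => hh //.
by move=> h2; have := lt_le_trans h h2; rewrite ltxx.
Qed.
Lemma vsum_le (I : Type) (s : seq I) (P : pred I) (F : I -> K) B :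
  0 <= B -> (forall i, P i -> v (F i) <= B) -> v (\sum_(i <- s | P i) F i) <= B.
Proof.
move=> B0 h; apply: (big_ind (fun x => v x <= B)) => //.
  by rewrite v0.
by move=> x y; apply: vDle.
Qed.
Lemma vnat n : v n%:R <= 1.
Proof.
elim: n => [|n IH]; first by rewrite v0.
by rewrite -addn1 natrD; apply: vDle => //; rewrite v1.
Qed.
Lemma vnat_le1 n x : v (x *+ n) <= v x.
Proof. rewrite -mulr_natl vM; have := vnat n; have := vge0 x; nra. Qed.
Lemma vp : v p%:R = (p%:R)^-1. Proof. exact: pabs_p Hv. Qed.
Lemma p_gt1 : (1 < p)%N. Proof. exact: prime_gt1. Qed.
Lemma pR_gt1 : 1 < (p%:R : R). Proof. by rewrite ltr1n p_gt1. Qed.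
Lemma vp_lt1 : v p%:R < 1.
Proof. by rewrite vp invf_lt1 ?pR_gt1 // (lt_trans ltr01 pR_gt1). Qed.
Lemma vpM x : v (p%:R * x) = v x / p%:R.
Proof. by rewrite vM vp mulrC. Qed.

Lemma vcoprime u : coprime p u -> v u%:R = 1.
Proof.
move=> cpu; apply/eqP; rewrite eq_le vnat /=.
have [a _ ] := Bezoutl u (prime_gt0 pp).
rewrite (eqP cpu) => /dvdnP [w hw].
have e : (1 : K) = (w * p)%:R - a%:R * u%:R by rewrite -hw natrD natrM addrK.
have := vD (w * p)%:R (- (a%:R * u%:R)).
rewrite -e v1 vN vM natrM vM.
have h1 := vnat w; have h2 := vnat a; have h3 := vp_lt1.
have h4 := vge0 (p%:R); have h5 := vge0 (w%:R); have h6 := vge0 (a%:R).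
have h7 := vge0 (u%:R).
clear hw e; rewrite le_max => /orP[] ?; rewrite leNgt; apply/negP => ?; nra.
Qed.
End Basic.

Lemma powle (R : realType) (x y : R) n : 0 <= x -> x <= y -> x ^+ n <= y ^+ n.
Proof. move=> x0 xy; apply: lerXn2r; rewrite ?nnegrE //; exact: le_trans xy. Qed.

Lemma binom_split (K : fieldType) (t : K) n :
  (t + 1) ^+ n.+2 - 1 = n.+2%:R * t +
    ((\sum_(i < n) t ^+ i.+2 *+ 'C(n.+2, i.+2)) + t ^+ n.+2).
Proof.
rewrite exprD1n big_ord_recl big_ord_recl big_ord_recr /= bin0 bin1 binn.
rewrite expr0 expr1 mulr1n mulr1n.
have -> : forall a b c : K, 1 + (a + (b + c)) - 1 = a + (b + c) by move=> *; ring.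
by rewrite mulr_natl.
Qed.


Lemma vsum_lt (R : realType) (K : fieldType) (v : K -> R) p (Hv : padic_abs p v)
  (I : Type) (s : seq I) (P : pred I) (F : I -> K) B :
  0 < B -> (forall i, P i -> v (F i) < B) -> v (\sum_(i <- s | P i) F i) < B.
Proof.
move=> B0 h; apply: (big_ind (fun x => v x < B)) => //.
  by rewrite (v0 Hv).
by move=> x y; apply: (vDlt Hv).
Qed.

Lemma vpow_sub (R : realType) (K : fieldType) (v : K -> R) p (Hv : padic_abs p v)
   (y : K) k : v (y - 1) < 1 -> v (y ^+ k - 1) <= v (y - 1).
Proof.
move=> hy; rewrite subrX1 (vM Hv).
have vy : v y <= 1.
  have -> : y = (y - 1) + 1 by rewrite subrK.
  by apply: (vDle Hv); rewrite ?(v1 Hv) // ltW.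
have hs : v (\sum_(i < k) y ^+ i) <= 1.
  apply: (vsum_le Hv) => // i _; elim: (nat_of_ord i) => [|j IH].
    by rewrite expr0 (v1 Hv).
  rewrite exprS (vM Hv); have := vge0 Hv (y ^+ j); have := vge0 Hv y; nra.
have := vge0 Hv (y - 1); have := vge0 Hv (\sum_(i < k) y ^+ i); nra.
Qed.


Section Analytic.
Variables (R : realType) (K : fieldType) (v : K -> R) (p : nat).
Hypothesis Hv : padic_abs p v.
Hypothesis pp : prime p.
Hypothesis podd : odd p.
Variable d : R.
Hypothesis d0 : 0 <= d.
Hypothesis dlt : d ^+ p.-1 < (p%:R)^-1.

Let vge0 := vge0 Hv.
Let vM := vM Hv.
Let v0 := v0 Hv.
Let v1 := v1 Hv.
Let vN := vN Hv.

Lemma pR_gt0 : 0 < (p%:R : R). Proof. by rewrite ltr0n prime_gt0. Qed.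

Lemma d_lt1 : d < 1.
Proof.
rewrite ltNge; apply/negP => h.
have := exprn_ege1 p.-1 h => h2.
have h3 : (p%:R : R)^-1 < 1 by rewrite invf_lt1 ?pR_gt0 // (pR_gt1 _ pp).
have := lt_trans dlt h3; by rewrite ltNge h2.
Qed.

Lemma v_binC x k : (0 < k < p)%N -> v (x *+ 'C(p, k)) <= v x / p%:R.
Proof.
move=> hk; have /dvdnP [m hm] := prime_dvd_bin pp hk.
rewrite hm mulrnA -(mulr_natl (x *+ m) p) (vpM Hv).
apply: ler_wpM2r; first by rewrite invr_ge0 ltW ?pR_gt0.
exact: (vnat_le1 Hv).
Qed.

Lemma p_eq : p = (p.-2).+2.
Proof. by have := prime_gt1 pp; case: (p) => [|[|n]]. Qed.

Lemma step_le (y : K) : v (y - 1) <= d -> v (y ^+ p - 1) <= v (y - 1) / p%:R.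
Proof.
move=> hy; set t := y - 1; have ey : y = t + 1 by rewrite /t subrK.
have t0 := vge0 t; have t1 : v t <= 1 by have := d_lt1; lra.
have ip0 : 0 <= (p%:R : R)^-1 by rewrite invr_ge0 ltW ?pR_gt0.
have B0 : 0 <= v t / p%:R by apply: mulr_ge0.
rewrite ey p_eq binom_split -p_eq.
apply: (vDle Hv); first by rewrite (vpM Hv).
apply: (vDle Hv).
  apply: (vsum_le Hv) => // i _; apply: le_trans (v_binC _ _) _.
    rewrite ltn0Sn /=; have := ltn_ord i; have := prime_gt1 pp; lia.
  apply: ler_wpM2r => //; rewrite (exprSr) vM; set w := v (t ^+ _).
  have : w <= 1.
    rewrite /w; elim: (i.+1) => [|j IH]; first by rewrite expr0 v1.
    rewrite exprS vM; have := vge0 (t ^+ j); nra.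
  have := vge0 (t ^+ i.+1); rewrite -/w; nra.
rewrite [t ^+ p](_ : _ = t * t ^+ p.-1); last by rewrite -exprS prednK ?prime_gt0.
rewrite vM.
have h1 : v (t ^+ p.-1) <= d ^+ p.-1.
  elim: (p.-1) => [|j IH]; first by rewrite !expr0 v1.
  rewrite !exprS vM; apply: ler_pM => //.
apply: ler_pM => //; exact: le_trans h1 (ltW dlt).
Qed.

Lemma iter_le (y : K) N : v (y - 1) <= d ->
  v (y ^+ (p ^ N) - 1) <= v (y - 1) / (p ^ N)%:R.
Proof.
move=> hy; elim: N => [|N IH]; first by rewrite expn0 expr1 divr1.
have hN : v (y ^+ (p ^ N) - 1) <= d.
  apply: le_trans IH _; apply: le_trans hy.
  rewrite ler_pdivrMr ?ler_peMr ?vge0 ?ler1n ?ltr0n ?expn_gt0 ?prime_gt0 //.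
rewrite expnSr exprM; apply: le_trans (step_le hN) _.
rewrite natrM invfM mulrA; apply: ler_wpM2r; first by rewrite invr_ge0 ltW ?pR_gt0.
exact: IH.
Qed.

Lemma root_step (y : K) : v (y - 1) <= d -> y ^+ p = 1 -> y = 1.
Proof.
move=> hy yp; apply/eqP; rewrite -subr_eq0; apply: contraT => tn0.
set t := y - 1 in hy tn0; have ey : y = t + 1 by rewrite /t subrK.
have tp : 0 < v t by rewrite lt_def (veq0 Hv) tn0 vge0.
have t1 : v t < 1 by apply: le_lt_trans hy d_lt1.
have ip0 : 0 < (p%:R : R)^-1 by rewrite invr_gt0 pR_gt0.
have B0 : 0 < v t / p%:R by apply: mulr_gt0.
have := binom_split t p.-2; rewrite -p_eq -ey yp subrr => e.
have : v (p%:R * t + (\sum_(i < p.-2) t ^+ i.+2 *+ 'C(p, i.+2) + t ^+ p)) = 0.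
  by rewrite -e.
rewrite (vDstrict Hv) ?(vpM Hv) => [h|]; first by have := B0; rewrite h ltxx.
apply: (vDlt Hv).
  apply: (vsum_lt Hv) => // i _; apply: le_lt_trans (v_binC _ _) _.
    rewrite ltn0Sn /=; have := ltn_ord i; have := prime_gt1 pp; lia.
  rewrite ltr_pM2r //; rewrite !exprS vM.
  have hw : v (t ^+ i) <= 1.
    elim: (nat_of_ord i) => [|j IH]; first by rewrite expr0 v1.
    rewrite exprS vM; have := vge0 (t ^+ j); nra.
  have := vge0 (t ^+ i); rewrite vM; nra.
rewrite [t ^+ p](_ : _ = t * t ^+ p.-1); last by rewrite -exprS prednK ?prime_gt0.
rewrite vM ltr_pM2l //.
have h1 : v (t ^+ p.-1) <= d ^+ p.-1.
  elim: (p.-1) => [|j IH]; first by rewrite !expr0 v1.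
  rewrite !exprS vM; apply: ler_pM => //.
exact: le_lt_trans h1 dlt.
Qed.

Lemma root_ppow e : forall y : K, v (y - 1) <= d -> y ^+ (p ^ e) = 1 -> y = 1.
Proof.
elim: e => [|e IH] y hy; first by rewrite expn0 expr1.
rewrite expnS exprM => h.
have hyp : v (y ^+ p - 1) <= d.
  exact: le_trans (vpow_sub Hv _ (le_lt_trans hy d_lt1)) hy.
exact: root_step hy (IH _ hyp h).
Qed.

Lemma root_unity (y : K) k : v (y - 1) <= d -> (0 < k)%N -> y ^+ k = 1 -> y = 1.
Proof.
move=> hy k0 yk.
have [m cm km] := pfactor_coprime pp k0.
set z := y ^+ (p ^ logn p k).
have hz : v (z - 1) <= d.
  exact: le_trans (vpow_sub Hv _ (le_lt_trans hy d_lt1)) hy.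
suff z1 : z = 1 by exact: root_ppow hy z1.
have zm : z ^+ m = 1 by rewrite /z -exprM mulnC -km.
have := subrX1 z m; rewrite zm subrr => /esym /eqP; rewrite mulf_eq0.
case/orP => [/eqP h|]; first by apply/eqP; rewrite -subr_eq0 h.
have -> : \sum_(i < m) z ^+ i = m%:R + \sum_(i < m) (z ^+ i - 1).
  by rewrite sumrB sumr_const card_ord addrC subrK.
rewrite -(veq0 Hv) (vDstrict Hv) (vcoprime Hv pp cm) ?oner_eq0 //.
apply: le_lt_trans _ d_lt1; apply: (vsum_le Hv) => // i _.
exact: le_trans (vpow_sub Hv _ (le_lt_trans hz d_lt1)) hz.
Qed.

Definition psum (f : nat -> K) N := \sum_(x < p ^ N) f x * (-1) ^+ x.
Definition fint (f : nat -> K) L := pcvg v (psum f) L.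

Lemma pcvg_uniq u a b : pcvg v u a -> pcvg v u b -> a = b.
Proof.
move=> ha hb; apply/eqP; rewrite -subr_eq0 -(veq0 Hv); apply: contraT => hn.
have ep : 0 < v (a - b) by rewrite lt_def hn vge0.
have [N1 h1] := ha _ ep; have [N2 h2] := hb _ ep.
have e : a - b = (u (maxn N1 N2) - b) - (u (maxn N1 N2) - a) by ring.
have := vD Hv (u (maxn N1 N2) - b) (- (u (maxn N1 N2) - a)).
rewrite -e vN; have := h1 (maxn N1 N2) (leq_maxl _ _).
have := h2 (maxn N1 N2) (leq_maxr _ _).
move=> g1 g2 g3.
have g4 : Num.max (v (u (maxn N1 N2) - b)) (v (u (maxn N1 N2) - a)) < v (a - b).
  by rewrite gt_max g1 g2.
by have := le_lt_trans g3 g4; rewrite ltxx.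
Qed.

Lemma plim_eq u l : pcvg v u l -> plim v u = l.
Proof.
move=> h; rewrite /plim; case: pselect => [e|n]; last by exfalso; apply: n; exists l.
by case: (cid e) => l' h' /=; exact: pcvg_uniq h' h.
Qed.

Lemma fint_val f L : fint f L -> fermionic v p f = L.
Proof. exact: plim_eq. Qed.

Lemma fint_ext f g L : (forall x, f x = g x) -> fint f L -> fint g L.
Proof. by move=> e; rewrite (_ : g = f) // funeqE => x; rewrite e. Qed.

Lemma fint_add f g a b : fint f a -> fint g b -> fint (fun x => f x + g x) (a + b).
Proof.
move=> ha hb eps ep; have [N1 h1] := ha _ ep; have [N2 h2] := hb _ ep.
exists (maxn N1 N2) => m hm.
have e1 : psum (fun x => f x + g x) m = psum f m + psum g m.
  by rewrite /psum -big_split; apply: eq_bigr => i _; rewrite mulrDl.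
have e : psum (fun x => f x + g x) m - (a + b) = (psum f m - a) + (psum g m - b).
  by rewrite e1; ring.
rewrite e; apply: (vDlt Hv); [apply: h1 | apply: h2];
  apply: leq_trans hm; [exact: leq_maxl | exact: leq_maxr].
Qed.

Lemma fint_scale c f a : fint f a -> fint (fun x => c * f x) (c * a).
Proof.
move=> ha eps ep; have [->|cn0] := eqVneq c 0.
  by exists 0%N => m _; rewrite /psum big1 ?mul0r ?subrr ?v0 // => i _; rewrite !mul0r.
have vc : 0 < v c by rewrite lt_def (veq0 Hv) cn0 vge0.
have [N h] := ha (eps / v c) (divr_gt0 ep vc).
exists N => m hm.
have e : psum (fun x => c * f x) m - c * a = c * (psum f m - a).
  by rewrite mulrBr /psum mulr_sumr; congr (_ - _); apply: eq_bigr => i _; rewrite mulrA.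
by rewrite e vM -ltr_pdivlMl // mulrC; apply: h.
Qed.

Lemma fint_sum n (F : 'I_n -> nat -> K) (a : 'I_n -> K) :
  (forall i, fint (F i) (a i)) -> fint (fun x => \sum_(i < n) F i x) (\sum_(i < n) a i).
Proof.
elim: n F a => [|n IH] F a h.
  move=> eps ep; exists 0%N => m _; rewrite big_ord0 subr0 /psum big1 ?v0 //.
  by move=> i _; rewrite big_ord0 mul0r.
rewrite big_ord_recr /=.
apply: (fint_ext (f := fun x => \sum_(i < n) F (widen_ord (leqnSn n) i) x + F ord_max x)).
  by move=> x; rewrite big_ord_recr.
apply: fint_add; last exact: h.
exact: IH.
Qed.

Lemma v2 : v 2 = 1.
Proof. by apply: (vcoprime Hv pp); rewrite coprimen2. Qed.

Lemma v1pc (c : K) : v (c - 1) <= d -> v (1 + c) = 1.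
Proof.
move=> h; have -> : 1 + c = 2 + (c - 1) by ring.
by rewrite (vDstrict Hv) v2 //; apply: le_lt_trans h d_lt1.
Qed.

Lemma fint_geom (c : K) : v (c - 1) <= d -> fint (fun x => c ^+ x) (2 / (1 + c)).
Proof.
move=> hc eps ep.
have v1c := v1pc hc.
have c1 : 1 + c != 0 by rewrite -(veq0 Hv) v1c oner_eq0.
have vi : v ((1 + c)^-1) = 1.
  have := vM (1 + c) (1 + c)^-1; rewrite mulfV // v1 v1c mul1r => h; by rewrite -h.
have ieps : 0 <= eps^-1 by rewrite invr_ge0 ltW.
exists (Num.Def.archi_bound eps^-1) => m hm.
have Mo : odd (p ^ m) by rewrite oddX podd orbT.
have e : psum (fun x => c ^+ x) m - 2 / (1 + c) = (c ^+ (p ^ m) - 1) * (1 + c)^-1.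
  rewrite /psum.
  have -> : \sum_(x < p ^ m) c ^+ x * (-1) ^+ x = \sum_(x < p ^ m) (- c) ^+ x.
    by apply: eq_bigr => i _; rewrite -exprMn mulrN1.
  have h := subrX1 (- c) (p ^ m).
  rewrite exprNn -signr_odd Mo /= expr1 in h.
  have -> : \sum_(i < p ^ m) (- c) ^+ i = (1 + c ^+ (p ^ m)) / (1 + c).
    apply: (mulIf c1); rewrite divfK //.
    have -> : 1 + c ^+ (p ^ m) = - (-1 * c ^+ (p ^ m) - 1) by ring.
    by rewrite h; ring.
  by field.
rewrite e vM vi mulr1; apply: le_lt_trans (iter_le m hc) _.
have hP : (0 < (p ^ m)%:R :> R) by rewrite ltr0n expn_gt0 prime_gt0.
have hN := archi_boundP ieps.
have hmP : ((Num.Def.archi_bound eps^-1)%:R <= (p ^ m)%:R :> R).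
  rewrite ler_nat; apply: leq_trans hm _; apply: ltnW; apply: ltn_expl; exact: prime_gt1.
have h1 : v (c - 1) <= 1 by have := d_lt1; lra.
have : eps^-1 < (p ^ m)%:R by apply: lt_le_trans hN hmP.
rewrite -invf_plt // => h2.
apply: le_lt_trans h2; rewrite -[X in _ <= X]mul1r; apply: ler_wpM2r => //; rewrite invr_ge0 ltW //.
Qed.

End Analytic.


Section Alg.
Variables (K : fieldType) (q : K).
Hypothesis q1 : q != 1.
Hypothesis qn0 : forall k, (0 < k)%N -> qnum q k != 0.

Let q1n0 : 1 - q != 0. Proof. by rewrite subr_eq0 eq_sym. Qed.

Definition Dp (r m : nat) := \prod_(i < m) (qnum q r - qnum q i).

Lemma qnum0 : qnum q 0 = 0. Proof. by rewrite /qnum expr0 subrr mul0r. Qed.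

Lemma Drec r m : Dp r.+1 m.+1 = Dp r m.+1 + qnum q m.+1 * q ^+ r * Dp r m.
Proof.
rewrite /Dp big_ord_recl big_ord_recr /= qnum0 subr0.
have -> : \prod_(i < m) (qnum q r.+1 - qnum q (bump 0 i)) =
          \prod_(i < m) (q * (qnum q r - qnum q i)).
  apply: eq_bigr => i _; rewrite /bump /= add1n /qnum !exprS.
  by field.
rewrite big_split /= prodr_const card_ord.
set P := \prod_(i < m) _.
have : qnum q r.+1 * q ^+ m = (qnum q r - qnum q m) + qnum q m.+1 * q ^+ r.
  by rewrite /qnum !exprS; field.
move=> e; rewrite mulrA e; ring.
Qed.

Lemma qfactS m : qfact q m.+1 = qfact q m * qnum q m.+1.
Proof. by rewrite /qfact big_nat_recr. Qed.

Lemma qfact0 : qfact q 0 = 1. Proof. by rewrite /qfact big_geq. Qed.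

Lemma qfact_neq0 m : qfact q m != 0.
Proof.
elim: m => [|m IH]; first by rewrite qfact0 oner_eq0.
by rewrite qfactS mulf_neq0 // qn0.
Qed.

Lemma Dp_last r : Dp r r.+1 = 0.
Proof. by rewrite /Dp big_ord_recr /= subrr mulr0. Qed.

Lemma Dp0 r : Dp r 0 = 1. Proof. by rewrite /Dp big_ord0. Qed.

Lemma core r z : \sum_(m < r.+1) (qfact q m)^-1 * Dp r m * z ^+ m =
                 \prod_(j < r) (1 + z * q ^+ j).
Proof.
elim: r z => [|r IH] z.
  by rewrite big_ord_recl big_ord0 big_ord0 qfact0 Dp0 invr1 !mul1r addr0.
set B := fun r m => (qfact q m)^-1 * Dp r m.
have hB : forall m, (qfact q m.+1)^-1 * Dp r.+1 m.+1 * z ^+ m.+1 =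
   B r m.+1 * z ^+ m.+1 + q ^+ r * z * (B r m * z ^+ m).
  move=> m; rewrite /B Drec qfactS.
  have h1 := qfact_neq0 m; have h2 := qn0 (ltn0Sn m).
  rewrite exprS; field; by rewrite h1 h2.
rewrite [LHS]big_ord_recl.
rewrite (eq_bigr (fun i : 'I_r.+1 => B r i.+1 * z ^+ i.+1 + q ^+ r * z * (B r i * z ^+ i)));
  last by move=> i _; exact: hB.
rewrite big_split /= -mulr_sumr IH.
rewrite [RHS]big_ord_recr /=.
have e : (qfact q 0)^-1 * Dp r.+1 0 * z ^+ 0 +
  \sum_(i < r.+1) B r i.+1 * z ^+ i.+1 = \prod_(j < r) (1 + z * q ^+ j).
  rewrite -IH qfact0 !Dp0.
  rewrite [in RHS](_ : \sum_(m < r.+1) B r m * z ^+ m =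
                          \sum_(m < r.+2) B r m * z ^+ m); last first.
    by rewrite [in RHS]big_ord_recr /= /B Dp_last mulr0 mul0r addr0.
  by rewrite [in RHS]big_ord_recl /B qfact0 Dp0.
rewrite addrA e; ring.
Qed.

End Alg.

Section Bridge.
Variables (K : fieldType) (q : K) (Y : K).

Definition Gs (P : {poly K}) d := \sum_(k < d.+1) P`_k * (-1) ^+ k * Y ^+ (d - k).

Lemma Gext (P : {poly K}) d : (size P <= d.+1)%N -> Gs P d.+1 = Y * Gs P d.
Proof.
move=> hs; rewrite /Gs big_ord_recr /= nth_default // mul0r mul0r addr0 mulr_sumr.
apply: eq_bigr => i _; rewrite subSn; last by have := ltn_ord i.
by rewrite exprS; ring.
Qed.

Lemma Gstep (P : {poly K}) d a : (size P <= d.+1)%N ->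
  Gs (P * (1 + a *: 'X)) d.+1 = (Y - a) * Gs P d.
Proof.
move=> hs.
have hc : forall k, (P * (1 + a *: 'X))`_k = P`_k + a * (if k == 0%N then 0 else P`_k.-1).
  by move=> k; rewrite mulrDr mulr1 -scalerAr coefD coefZ coefMX.
rewrite /Gs (eq_bigr (fun k : 'I_d.+2 => P`_k * (-1) ^+ k * Y ^+ (d.+1 - k) +
    a * (if k == 0%N :> nat then 0 else P`_k.-1) * (-1) ^+ k * Y ^+ (d.+1 - k)));
  last by move=> k _; rewrite hc; ring.
rewrite big_split /= -/(Gs P d.+1) Gext // big_ord_recl /= mulr0 !mul0r add0r.
rewrite mulrBl; congr (_ + _); rewrite /Gs mulr_sumr -sumrN.
apply: eq_bigr => i _; rewrite /bump /= add1n subSS exprS; ring.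
Qed.

Definition Pst (m : nat) : {poly K} := \prod_(i < m) (1 + qnum q i.+1 *: 'X).

Lemma Pst_size m : (size (Pst m) <= m.+1)%N.
Proof.
elim: m => [|m IH]; first by rewrite /Pst big_ord0 size_poly1.
rewrite /Pst big_ord_recr /=; apply: leq_trans (size_mul_leq _ _) _.
have h2 : (size ((1 + qnum q m.+1 *: 'X)%R : {poly K}) <= 2)%N.
  apply: leq_trans (size_add _ _) _; rewrite geq_max size_poly1 /=.
  by apply: leq_trans (size_scale_leq _ _) _; rewrite size_polyX.
move: IH h2; rewrite -/(Pst m); lia.
Qed.

Lemma Pst_G m : Gs (Pst m) m = \prod_(i < m) (Y - qnum q i.+1).
Proof.
elim: m => [|m IH].
  by rewrite /Gs /Pst !big_ord0 big_ord_recl big_ord0 addr0 coef1 /= !mulr1.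
rewrite /Pst big_ord_recr /= -/(Pst m) Gstep ?Pst_size // IH big_ord_recr /=; ring.
Qed.

Lemma bridge m : \sum_(k < m.+1) qStirling1 q (m%:Z - 1) k * (-1) ^+ k * Y ^+ (m - k)
   = \prod_(i < m) (Y - qnum q i).
Proof.
case: m => [|m].
  by rewrite big_ord_recl big_ord0 /= big_ord0 addr0 !mulr1.
have -> : (m.+1%:Z - 1) = m%:Z by rewrite -addn1 PoszD addrK.
rewrite (eq_bigr (fun k : 'I_m.+2 => (Pst m)`_k * (-1) ^+ k * Y ^+ (m.+1 - k))); last first.
  move=> k _; rewrite /qStirling1 /Pst; congr (_ * _ * _).
  by rewrite big_add1 /= big_mkord.
rewrite -/(Gs (Pst m) m.+1) Gext ?Pst_size // Pst_G big_ord_recl /= /qnum expr0 subrr mul0r subr0.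
done.
Qed.

End Bridge.

Section QPart.
Variables (R : realType) (K : fieldType) (v : K -> R) (p : nat) (q : K).
Hypothesis Hv : padic_abs p v.
Hypothesis pp : prime p.
Hypothesis podd : odd p.
Hypothesis hq : v (1 - q) < (p%:R : R) `^ (- ((p.-1)%:R)^-1).
Hypothesis q1 : q != 1.

Local Notation d := (v (q - 1)).
Lemma qd0 : 0 <= d. Proof. apply: (vge0 Hv). Qed.
Lemma qdlt : d ^+ p.-1 < (p%:R)^-1.
Proof.
set b := (p%:R : R) `^ (- ((p.-1)%:R)^-1).
have h1 : (0 < p.-1)%N by have := prime_gt1 pp; lia.
have pn : ((p.-1)%:R : R) != 0.
  by rewrite pnatr_eq0; apply/eqP => e; rewrite e in h1.
have hb : b ^+ p.-1 = (p%:R)^-1.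
  rewrite /b -powR_mulrn ?powR_ge0 // -powRrM mulNr mulVf // powR_inv1 //.
have hdb : d < b by rewrite (vB Hv).
have hn : (p.-1 != 0)%N by apply/eqP => e; rewrite e in h1.
by rewrite -hb ltrXn2r ?qd0.
Qed.
Let d_lt1 := d_lt1 pp qdlt.

Lemma vq : v q = 1.
Proof.
have -> : q = 1 + (q - 1) by rewrite addrC subrK.
by rewrite (vDstrict Hv) ?(v1 Hv) //; exact: d_lt1.
Qed.
Lemma q0 : q != 0. Proof. by rewrite -(veq0 Hv) vq oner_eq0. Qed.

Lemma vqX k : v (q ^+ k) = 1.
Proof. elim: k => [|k IH]; by rewrite ?expr0 ?(v1 Hv) // exprS (vM Hv) vq IH mulr1. Qed.

Lemma qz_le (a : int) : v (q ^ a - 1) <= d.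
Proof.
case: a => k.
  exact: (vpow_sub Hv k d_lt1).
rewrite /exprz.
set y := q ^+ k.+1.
have y0 : y != 0 by rewrite expf_neq0 // q0.
have -> : y^-1 - 1 = - (y - 1) * y^-1 by field.
rewrite (vM Hv) (vN Hv).
have vyi : v (y^-1) = 1.
  have := vM Hv y y^-1; rewrite mulfV // (v1 Hv) vqX mul1r => h; by rewrite -h.
rewrite vyi mulr1; exact: (vpow_sub Hv _ d_lt1).
Qed.

Lemma geomq (a : int) : fint v p (fun x => (q ^ a) ^+ x) (2 / (1 + q ^ a)).
Proof. exact: (fint_geom Hv pp podd qd0 qdlt (qz_le a)). Qed.

Lemma qnum_neq0 k : (0 < k)%N -> qnum q k != 0.
Proof.
move=> k0; rewrite /qnum mulf_neq0 // ?invr_eq0 ?subr_eq0 1?eq_sym //.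
apply/eqP => h; have := root_unity Hv pp podd qd0 qdlt (y := q) (le_refl _) k0.
by move=> /(_ h) /eqP; rewrite (negbTE q1).
Qed.

Lemma multi r : forall (h : int) (l : nat) (c : K) (F : seq nat -> K),
  (forall xs, F xs = c * (q ^+ (l * sumn xs) *
     \prod_(j < r) q ^ ((h - (j.+1)%:Z) * (nth 0%N xs j)%:Z))) ->
  fermionic_multi v p r F = c * \prod_(j < r) (2 / (1 + q ^ (l%:Z + h - (j.+1)%:Z))).
Proof.
elim: r => [|r IH] h l c F hF.
  by rewrite /= hF /= muln0 expr0 !big_ord0 !mulr1.
rewrite /=.
set a := (l%:Z + h - 1).
set P := \prod_(j < r) (2 / (1 + q ^ (l%:Z + (h - 1) - (j.+1)%:Z))).
have hx : forall x, fermionic_multi v p r (fun xs => F (x :: xs)) = (c * P) * (q ^ a) ^+ x.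
  move=> x; rewrite (IH (h - 1) l (c * (q ^ a) ^+ x)); first by rewrite /P; ring.
  move=> xs; rewrite hF big_ord_recl /=.
  have -> : \prod_(i < r) q ^ ((h - (bump 0 i).+1%:Z) * (nth 0%N (x :: xs) (bump 0 i))%:Z)
       = \prod_(j < r) q ^ ((h - 1 - (j.+1)%:Z) * (nth 0%N xs j)%:Z).
    apply: eq_bigr => j _; congr (q ^ (_ * _)); rewrite /bump /=; lia.
  have EE : q ^+ (l * (x + sumn xs)) * q ^ ((h - 1) * x%:Z) = (q ^ a) ^+ x * q ^+ (l * sumn xs).
    have E : forall n : nat, q ^+ n = q ^ (n%:Z) by [].
    have E2 : (q ^ a) ^+ x = q ^ (a * x%:Z) by rewrite -exprz_exp.
    rewrite E2 (E (l * (x + sumn xs))) (E (l * sumn xs)) -!expfzDr ?q0 //.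
    congr (q ^ _); rewrite /a !PoszM !PoszD; ring.
  rewrite (mulrA (q ^+ _)) EE; ring.
rewrite (_ : (fun x => fermionic_multi v p r (fun xs => F (x :: xs))) =
             (fun x => (c * P) * (q ^ a) ^+ x)); last by apply: funext.
rewrite (fint_val Hv (fint_scale Hv (c * P) (geomq a))).
rewrite big_ord_recl /=.
have -> : \prod_(i < r) (2 / (1 + q ^ (l%:Z + h - (bump 0 i).+1%:Z))) = P.
  by apply: eq_bigr => j _; congr (2 / (1 + q ^ _)); rewrite /bump /=; lia.
by rewrite /a; ring.
Qed.

End QPart.

Section Final.
Variables (R : realType) (K : fieldType) (v : K -> R) (p : nat) (q : K).
Hypothesis Hv : padic_abs p v.
Hypothesis pp : prime p.
Hypothesis podd : odd p.
Hypothesis hq : v (1 - q) < (p%:R : R) `^ (- ((p.-1)%:R)^-1).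
Hypothesis q1 : q != 1.

Definition Ev (l : nat) := 2 / (1 + q ^+ l).
Definition qEval n m := ((1 - q) ^+ n)^-1 *
  \sum_(l < n.+1) 'C(n, l)%:R * (-1) ^+ l * q ^+ (m * l) * Ev l.

Let geom l : fint v p (fun x => (q ^+ l) ^+ x) (Ev l) := geomq Hv pp podd hq q1 l.

Lemma qEP_fint n m : fint v p (fun y => qnum q (m + y) ^+ n) (qEval n m).
Proof.
rewrite /qEval.
apply: (fint_ext (f := fun y => ((1 - q) ^+ n)^-1 * \sum_(l < n.+1)
   ('C(n, l)%:R * (-1) ^+ l * q ^+ (m * l)) * (q ^+ l) ^+ y)).
  move=> y; rewrite /qnum expr_div_n mulrC; congr (_ * _).
  rewrite exprBn; apply: eq_bigr => i _.
  rewrite expr1n mulr1 exprD exprMn -!exprM (mulnC y i); ring.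
apply: (fint_scale Hv); apply: (fint_sum Hv) => l; apply: (fint_scale Hv); exact: geom.
Qed.

Lemma qEP_val n m : qEulerPoly v p q n m = qEval n m.
Proof. exact: (fint_val Hv (qEP_fint n m)). Qed.

Lemma qEuler_fint l : fint v p (fun y => qnum q y ^+ l) (qEval l 0).
Proof. by apply: (fint_ext _ (qEP_fint l 0)) => y; rewrite add0n. Qed.

Lemma qEuler_val l : qEuler v p q l = qEval l 0.
Proof. exact: (fint_val Hv (qEuler_fint l)). Qed.

Lemma alt j : \sum_(l < j.+1) 'C(j, l)%:R * (-1) ^+ (j + l) * (1 - q) ^+ l * qEuler v p q l
   = (-1) ^+ j * Ev j.
Proof.
have q1n0 : 1 - q != 0 by rewrite subr_eq0 eq_sym.
have h1 : fint v p (fun y => \sum_(l < j.+1) ('C(j, l)%:R * (-1) ^+ (j + l) * (1 - q) ^+ l)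
    * qnum q y ^+ l)
  (\sum_(l < j.+1) ('C(j, l)%:R * (-1) ^+ (j + l) * (1 - q) ^+ l) * qEuler v p q l).
  apply: (fint_sum Hv) => l; apply: (fint_scale Hv); rewrite qEuler_val; exact: qEuler_fint.
have h2 : fint v p (fun y => \sum_(l < j.+1) ('C(j, l)%:R * (-1) ^+ (j + l) * (1 - q) ^+ l)
    * qnum q y ^+ l) ((-1) ^+ j * Ev j).
  apply: (fint_ext (f := fun y => (-1) ^+ j * (q ^+ j) ^+ y)).
    move=> y.
    have w : (1 - q) * qnum q y = 1 - q ^+ y by rewrite /qnum; field.
    have e1 : (q ^+ j) ^+ y = (- ((1 - q) * qnum q y) + 1) ^+ j.
      by rewrite w exprAC; congr (_ ^+ _); ring.
    rewrite e1 exprD1n mulr_sumr; apply: eq_bigr => l _.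
    have mE : forall a b : K, (a * b) ^+ l = a ^+ l * b ^+ l by move=> a b; rewrite exprMn.
    rewrite (exprNn ((1 - q) * qnum q y)) (mE (1 - q) (qnum q y)) exprD -mulr_natl; ring.
  apply: (fint_scale Hv); exact: geom.
exact: (pcvg_uniq Hv h1 h2).
Qed.

End Final.

Unset Implicit Arguments.
Set Strict Implicit.

Theorem mainTheorem12 (R : realType) (K : closedFieldType) (v : K -> R)
    (p : nat) (q : K) (h : int) (n r : nat) :
  prime p -> odd p ->
  padic_abs p v -> pcomplete v ->
  q != 1 ->
  v (1 - q) < (p%:R : R) `^ (- ((p.-1)%:R)^-1) ->
  (0 < n)%N ->
  let RHS1 :=
    ((2 : K) ^+ r)^-1 * \sum_(m < r.+1) (qfact q m)^-1 *
      \sum_(k < m.+1) q ^ ((h - r%:Z) * m%:Z) * qStirling1 q (m%:Z - 1) k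
         * (-1) ^+ k * qnum q r ^+ (m - k) * qEulerPoly v p q n m in
  let RHS2 :=
    ((2 : K) ^+ r)^-1 * \sum_(m < r.+1) (qfact q m)^-1 *
      \sum_(k < m.+1) q ^ ((h - r%:Z) * m%:Z) * qStirling1 q (m%:Z - 1) k
         * (-1) ^+ k * qnum q r ^+ (m - k) *
         (((1 - q) ^+ n)^-1 *
          \sum_(j < n.+1) \sum_(l < j.+1)
             ('C(n, j))%:R * ('C(j, l))%:R * (-1) ^+ (j + l) * (1 - q) ^+ l
             * q ^+ (m * j) * qEuler v p q l) in
  fermionic v p (norlund_qEuler v p q h r n) = RHS1 /\ RHS1 = RHS2.
Proof.
move=> pp podd Hv _ q1 hq _ RHS1 RHS2.
have qn0 := qnum_neq0 Hv pp podd hq q1.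
have QE := qEP_val Hv pp podd hq q1 n.
have Qnz := q0 Hv pp podd hq q1.
have geom l : fint v p (fun x => (q ^+ l) ^+ x) (Ev q l) := geomq Hv pp podd hq q1 l.
split; last first.
  rewrite /RHS1 /RHS2; congr (_ * _); apply: eq_bigr => m _; congr (_ * _).
  apply: eq_bigr => k _; congr (_ * _).
  rewrite QE /qEval; congr (_ * _); apply: eq_bigr => j _.
  rewrite (_ : \sum_(l < j.+1) 'C(n, j)%:R * 'C(j, l)%:R * (-1) ^+ (j + l) * (1 - q) ^+ l
     * q ^+ (m * j) * qEuler v p q l = 'C(n, j)%:R * q ^+ (m * j) *
     \sum_(l < j.+1) 'C(j, l)%:R * (-1) ^+ (j + l) * (1 - q) ^+ l * qEuler v p q l);
    last by rewrite mulr_sumr; apply: eq_bigr => l _; ring.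
  rewrite (alt Hv pp podd hq q1); ring.
set c := ((1 - q) ^+ n)^-1.
set J := fun l : nat => \prod_(j < r) (2 / (1 + q ^ (l%:Z + h - (j.+1)%:Z))).
have Lv : fermionic v p (norlund_qEuler v p q h r n) =
    c * \sum_(l < n.+1) 'C(n, l)%:R * (-1) ^+ l * (J l)^-1 * Ev q l.
  apply: (fint_val Hv).
  apply: (fint_ext (f := fun x => c * \sum_(l < n.+1)
     ('C(n, l)%:R * (-1) ^+ l * (J l)^-1) * (q ^+ l) ^+ x)).
    move=> x; rewrite /norlund_qEuler -/c; congr (_ * _); apply: eq_bigr => l _.
    rewrite (multi Hv pp podd hq q1 (r := r) (h := h) (l := l) (c := 1)) => [|xs]; last by rewrite mul1r.
    rewrite mul1r -exprM; ring.
  apply: (fint_scale Hv); apply: (fint_sum Hv) => l; apply: (fint_scale Hv); exact: geom.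
rewrite Lv /RHS1.
have inner : forall m : nat, \sum_(k < m.+1) q ^ ((h - r%:Z) * m%:Z) * qStirling1 q (m%:Z - 1) k
     * (-1) ^+ k * qnum q r ^+ (m - k) * qEulerPoly v p q n m =
   q ^ ((h - r%:Z) * m%:Z) * Dp q r m * qEval q n m.
  move=> m.
  have -> : Dp q r m = \sum_(k < m.+1) qStirling1 q (m%:Z - 1) k * (-1) ^+ k *
     qnum q r ^+ (m - k) by rewrite bridge.
  rewrite QE mulr_sumr mulr_suml; apply: eq_bigr => k _; ring.
rewrite [in RHS](eq_bigr (fun m : 'I_r.+1 => \sum_(l < n.+1) (qfact q m)^-1 *
   (q ^ ((h - r%:Z) * m%:Z) * Dp q r m * (c * ('C(n, l)%:R * (-1) ^+ l * q ^+ (m * l) * Ev q l)))));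
  last by move=> m _; rewrite inner /qEval -/c !mulr_sumr.
rewrite exchange_big /= mulr_sumr mulr_sumr; apply: eq_bigr => l _.
set z := q ^ (h - r%:Z) * q ^+ l.
have Jinv : (J l)^-1 = ((2 : K) ^+ r)^-1 * \prod_(j < r) (1 + z * q ^+ j).
  rewrite /J -prodfV.
  under eq_bigr => j _ do rewrite invf_div.
  rewrite big_split /= prodr_const card_ord exprVn mulrC; congr (_ * _).
  rewrite (reindex_inj rev_ord_inj) /=; apply: eq_bigr => j _; congr (1 + _).
  rewrite /z -[q ^+ l]/(q ^ (l%:Z)) -[q ^+ j]/(q ^ (j%:Z)) -!expfzDr //.
  congr (q ^ _); rewrite /=; have := ltn_ord j; lia.
rewrite Jinv -(core q1 qn0 r z) !mulr_sumr mulr_suml mulr_sumr.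
apply: eq_bigr => m _.
have zp : z ^+ m = q ^ ((h - r%:Z) * m%:Z) * q ^+ (m * l).
  by rewrite /z exprMn -exprz_exp -exprM (mulnC l m).
rewrite zp; ring.
Qed.
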